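(* Let $\Gamma=(Q,A,E,(\delta_e)_{e\in E})$ be an MEMDP, $q\in Q$, and $W$ a parity objective. Then $$\sup_{\tau\in\mathcal D(\mathrm{Strat}(Q,A))}\inf_{b\in\mathcal D(E)}\mathrm{val}^{\mathrm{pr}}_q(\Gamma,b,\tau,W)=\inf_{b\in\mathcal D(E)}\sup_{\tau\in\mathcal D(\mathrm{Strat}(Q,A))}\mathrm{val}^{\mathrm{pr}}_q(\Gamma,b,\tau,W),$$ and consequently $\sup_{\tau\in\mathcal D(\mathrm{Strat}(Q,A))}\mathrm{val}^{\mathrm{uni}}_q(\Gamma,\tau,W)=\inf_{b\in\mathcal D(E)}\mathrm{val}^{\mathrm{pr}}_q(\Gamma,b,W)$.
   Context: $\mathcal D(X)$ is the set of distributions on $X$ with countable support. An MDP $G=(Q,A,\delta)$ has finite non-empty $Q,A$ and $\delta:Q\times A\to\mathcal D(Q)$; strategies are maps $\sigma:Q\cdot(A\cdot Q)^*\to\mathcal D(A)$, $\mathrm{Strat}(Q,A)$ is their set, and $\mathbb P^\sigma_q[G,\cdot]$ is the induced probability measure on infinite runs from $q$ (infinite state sequences measured by projection). A mixed strategy is $\tau\in\mathcal D(\mathrm{Strat}(Q,A))$ (countable support), with $\mathbb P^\tau_q[G,\cdot]:=\sum_\sigma\tau(\sigma)\mathbb P^\sigma_q[G,\cdot]$. A parity objective given by $f:Q\to\mathbb N$ is the set of infinite state sequences whose maximal label seen infinitely often is even. An MEMDP is $\Gamma=(Q,A,E,(\delta_e)_{e\in E})$ with $E$ finite non-empty and each $\Gamma[e]=(Q,A,\delta_e)$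 an MDP. For a (mixed or not) strategy $\tau$: $\mathrm{val}^{\mathrm{pr}}_q(\Gamma,b,\tau,W)=\sum_e b(e)\mathbb P^\tau_q[\Gamma[e],W]$, $\mathrm{val}^{\mathrm{uni}}_q(\Gamma,\tau,W)=\min_e\mathbb P^\tau_q[\Gamma[e],W]$; $\mathrm{val}^{\mathrm{pr}}_q(\Gamma,b,W)=\sup_{\sigma\in\mathrm{Strat}(Q,A)}\mathrm{val}^{\mathrm{pr}}_q(\Gamma,b,\sigma,W)$. *)

(* Defs.v *)
From HB Require Import structures.
From mathcomp Require Import all_boot all_order all_algebra.
From mathcomp Require Import all_classical all_reals all_analysis.

Set Implicit Arguments.
Unset Strict Implicit.
Unset Printing Implicit Defensive.

Import Order.TTheory GRing.Theory Num.Theory.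
Local Open Scope classical_set_scope.
Local Open Scope ring_scope.

Definition is_fdist (R : realType) (X : finType) (p : X -> R) : Prop :=
  (forall x, 0 <= p x) /\ \sum_(x : X) p x = 1.

Definition is_MEMDP (R : realType) (Q A E : finType)
  (delta : E -> Q -> A -> Q -> R) : Prop :=
  forall e q a, is_fdist (delta e q a).

(* Histories Q.(A.Q)^* are encoded as (q0, [:: (a1,q1); ...; (an,qn)]).
   A strategy maps a history to a distribution on A. *)
Definition strat (R : realType) (Q A : finType) := Q -> seq (A * Q) -> A -> R.

Definition is_strat (R : realType) (Q A : finType) (s : strat R Q A) : Prop :=
  forall q0 h, is_fdist (s q0 h).

(* Probability, in the MDP with transition function delta_e, starting from
   history (q0, h), that the next visited states are exactly ss
   (actions are summed out, i.e. we measure state sequences by projection). *)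
Fixpoint cyl_prob (R : realType) (Q A : finType) (delta_e : Q -> A -> Q -> R)
  (s : strat R Q A) (q0 : Q) (h : seq (A * Q)) (ss : seq Q) : R :=
  match ss with
  | [::] => 1
  | s' :: ss' =>
      \sum_(a : A) s q0 h a * delta_e (last q0 [seq x.2 | x <- h]) a s'
                   * cyl_prob delta_e s q0 (rcons h (a, s')) ss'
  end.

(* Infinite state sequences (runs); the point is only needed for the
   pointedType structure required by generated sigma-algebras. *)
Definition runT (Q : finType) (pt : Q) := nat -> Q.
HB.instance Definition _ (Q : finType) (pt : Q) := Choice.on (runT pt).
HB.instance Definition _ (Q : finType) (pt : Q) :=
  isPointed.Build (runT pt) (fun _ => pt).

Definition cyl (Q : finType) (pt : Q) (p : seq Q) : set (runT pt) :=
  [set w | forall i, (i < size p)%N -> w i = nth pt p i].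
Arguments cyl {Q} pt p.

Definition cylinders (Q : finType) (pt : Q) : set (set (runT pt)) :=
  range (cyl pt).
Arguments cylinders {Q} pt.

Definition runs (Q : finType) (pt : Q) := g_sigma_algebraType (cylinders pt).
Arguments runs {Q} pt.

(* P is the probability measure P^s_q[G_e, .] on runs: it is determined
   (Caratheodory) by its values on cylinders. *)
Definition is_run_measure (R : realType) (Q A : finType)
  (delta_e : Q -> A -> Q -> R) (s : strat R Q A) (q : Q)
  (P : probability (runs q) R) : Prop :=
  forall (s0 : Q) (ss : seq Q),
    P (cyl q (s0 :: ss)) = (((s0 == q)%:R * cyl_prob delta_e s s0 [::] ss)%R)%:E.
Arguments is_run_measure {R Q A} delta_e s q P.

Definition parity_obj (Q : finType) (pt : Q) (f : Q -> nat) : set (runs pt) :=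
  [set w : runT pt | exists m : nat, ~~ odd m /\
     (forall N, exists n, (N <= n)%N /\ f (w n) = m) /\
     (exists N, forall n, (N <= n)%N -> (f (w n) <= m)%N)].
Arguments parity_obj {Q} pt f.

Definition is_mixed (R : realType) (Q A : finType) (tau : strat R Q A -> R) : Prop :=
  [/\ (forall s, 0 <= tau s),
      (forall s, tau s != 0 -> is_strat s),
      countable [set s | tau s != 0] &
      (\esum_(s in [set s | tau s != 0%R]) (tau s)%:E = 1)%E].

Local Open Scope ereal_scope.

Definition Pmix (R : realType) (Q A : finType) (q : Q)
  (Pe : strat R Q A -> probability (runs q) R) (tau : strat R Q A -> R)
  (W : set (runs q)) : \bar R :=
  \esum_(s in [set s | tau s != 0%R]) (tau s)%:E * Pe s W.

Definition valpr_mixed (R : realType) (Q A E : finType) (q : Q)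
  (P : E -> strat R Q A -> probability (runs q) R) (b : E -> R)
  (tau : strat R Q A -> R) (W : set (runs q)) : \bar R :=
  \sum_(e : E) (b e)%:E * Pmix (P e) tau W.

Definition valuni_mixed (R : realType) (Q A E : finType) (q : Q)
  (P : E -> strat R Q A -> probability (runs q) R)
  (tau : strat R Q A -> R) (W : set (runs q)) : \bar R :=
  ereal_inf [set Pmix (P e) tau W | e in [set: E]].

Definition valpr (R : realType) (Q A E : finType) (q : Q)
  (P : E -> strat R Q A -> probability (runs q) R) (b : E -> R)
  (W : set (runs q)) : \bar R :=
  ereal_sup [set \sum_(e : E) (b e)%:E * P e s W | s in [set s | is_strat s]].

(* Main.v *)
Require Import Defs.
From HB Require Import structures.
From mathcomp Require Import all_boot all_order all_algebra.
From mathcomp Require Import all_classical all_reals all_analysis.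
Local Open Scope classical_set_scope.
Local Open Scope ring_scope.
Local Open Scope ereal_scope.

From mathcomp Require Import ring lra.
Import Order.TTheory GRing.Theory Num.Theory.
Set Implicit Arguments.
Unset Strict Implicit.
Unset Printing Implicit Defensive.

Local Close Scope ereal_scope.

Lemma cross2 (R : realType) (x1 y1 x2 y2 : R) :
  0 < x1 -> y1 <= 0 -> 0 < y2 -> x2 <= 0 ->
  (forall t, 0 <= t <= 1 -> ~ (0 < t * x1 + (1-t) * x2 /\ 0 < t * y1 + (1-t) * y2)) ->
  y2 * x1 <= y1 * x2.
Proof.
move=> hx1 hy1 hy2 hx2 H; rewrite leNgt; apply/negP => hD.
set d1 := x1 - x2; set d2 := y2 - y1.
have d1p : 0 < d1 by rewrite /d1; lra.
have d2p : 0 < d2 by rewrite /d2; lra.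
set t := (- x2 * d2 + y2 * d1) / (2 * d1 * d2).
have tx : t * x1 + (1-t) * x2 = (y2 * x1 - y1 * x2) / (2 * d2).
  rewrite /t /d1 /d2; field; apply/andP; split; apply/lt0r_neq0; lra.
have ty : t * y1 + (1-t) * y2 = (y2 * x1 - y1 * x2) / (2 * d1).
  rewrite /t /d1 /d2; field; apply/andP; split; apply/lt0r_neq0; lra.
apply: (H t).
  apply/andP; split.
    rewrite /t divr_ge0 //; last by rewrite !mulr_ge0 // ltW.
    rewrite /d1 /d2; nra.
  rewrite /t ler_pdivrMr; last by rewrite !mulr_gt0.
  rewrite /d1 /d2 mul1r; nra.
rewrite tx ty; split; apply: divr_gt0; lra.
Qed.

Lemma two_d (R : realType) (T : Type) (Vp : set T) (x y : T -> R) :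
  (forall p1 p2 t, Vp p1 -> Vp p2 -> 0 <= t <= 1 -> exists p, Vp p /\
      x p = t * x p1 + (1-t) * x p2 /\ y p = t * y p1 + (1-t) * y p2) ->
  (forall p, Vp p -> ~ (0 < x p /\ 0 < y p)) ->
  exists l : R, 0 <= l <= 1 /\ forall p, Vp p -> l * x p + (1-l) * y p <= 0.
Proof.
move=> cvx nq.
pose L0 := [set r : R | r = 0 \/ exists p, Vp p /\ 0 < y p /\ r = y p / (y p - x p)].
have yx p : Vp p -> 0 < y p -> x p <= 0.
  by move=> Vpp yp; rewrite leNgt; apply/negP => xp; apply: (nq p).
have L0ub1 r : L0 r -> r <= 1.
  case=> [->|[p [Vpp [yp ->]]]]; first by [].
  have := yx p Vpp yp => xp.
  by rewrite ler_pdivrMr ?mul1r; lra.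
have hs : has_sup L0.
  by split; [exists 0; left | exists 1 => r /L0ub1].
pose l := sup L0.
have l0 : 0 <= l by apply: sup_upper_bound => //; left.
have l1 : l <= 1 by apply: sup_le_ub; [exists 0; left | move=> r /L0ub1].
exists l; split; first by rewrite l0 l1.
move=> p Vpp.
have [yp|yn] := ltP 0 (y p).
  have xp := yx p Vpp yp.
  have : y p / (y p - x p) <= l by apply: sup_upper_bound => //; right; exists p.
  rewrite ler_pdivrMr; last lra.
  nra.
have [xn|xp] := leP (x p) 0; first nra.
have ub : l <= - y p / (x p - y p).
  apply: sup_le_ub; first by exists 0; left.
  move=> r [->|[p2 [Vp2 [y2 ->]]]].
    by apply: divr_ge0; lra.
  have x2 := yx p2 Vp2 y2.
  have cr : y p2 * x p <= y p * x p2.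
    apply: cross2 => // t ht [h1 h2].
    have [p' [Vp' [ex ey]]] := cvx p p2 t Vpp Vp2 ht.
    by apply: (nq p' Vp'); rewrite ex ey.
  rewrite ler_pdivrMr; last lra.
  rewrite mulrAC ler_pdivlMr; last lra.
  nra.
move: ub; rewrite ler_pdivlMr; last lra.
nra.
Qed.

Definition cvxV (R : realType) (E : finType) (T : Type) (V : set T) (val : T -> E -> R) :=
  forall p1 p2 t, V p1 -> V p2 -> 0 <= t <= 1 -> exists p, V p /\
      forall e, val p e = t * val p1 e + (1-t) * val p2 e.

Lemma sum_ind (R : realType) (E : finType) (e0 : E) (F : E -> R) (c : R) :
  \sum_e (F e + (e == e0)%:R * c) = \sum_e F e + c.
Proof.
rewrite big_split /=; congr (_ + _).
rewrite (bigD1 e0) //= eqxx mul1r big1 ?addr0 // => e /negPf ->; by rewrite mul0r.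
Qed.

Lemma sep (R : realType) (E : finType) (T : Type) (V : set T) (n : nat) :
  forall (val : T -> E -> R) (S : {set E}), #|S| = n.+1 ->
  cvxV V val ->
  (forall p, V p -> ~ (forall e, e \in S -> 0 < val p e)) ->
  exists b : E -> R, [/\ (forall e, 0 <= b e), (forall e, e \notin S -> b e = 0),
     \sum_e b e = 1 & forall p, V p -> \sum_e b e * val p e <= 0].
Proof.
elim: n => [|n IH] val S hS cvx hV.
  have [e0 He0] : exists e0, S = [set e0]%SET by apply/cards1P; rewrite hS.
  exists (fun e => (e == e0)%:R); split.
  - by move=> e; case: (e == e0).
  - by move=> e; rewrite He0 !inE => /negPf ->.
  - by rewrite (bigD1 e0) //= eqxx big1 ?addr0 // => e /negPf ->.
  - move=> p Vp; rewrite (bigD1 e0) //= eqxx mul1r big1 ?addr0; last first.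
      by move=> e /negPf ->; rewrite mul0r.
    rewrite leNgt; apply/negP => h; apply: (hV p Vp) => e.
    by rewrite He0 !inE => /eqP ->.
have [e1 e1S] : exists e1, e1 \in S.
  by apply/card_gt0P; rewrite hS.
have [e2 e2S] : exists e2, e2 \in S :\ e1.
  by apply/card_gt0P; move: hS; rewrite (cardsD1 e1 S) e1S add1n => -[->].
have e21 : e2 != e1 by move: e2S; rewrite in_setD1 => /andP[].
have {}e2S : e2 \in S by move: e2S; rewrite in_setD1 => /andP[].
pose Vp := [set p | V p /\ forall e, e \in S -> e != e1 -> e != e2 -> 0 < val p e].
have [l [hl hl2]] : exists l : R, 0 <= l <= 1 /\
    forall p, Vp p -> l * val p e1 + (1-l) * val p e2 <= 0.
  apply: two_d.
    move=> p1 p2 t [V1 P1] [V2 P2] ht.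
    have [p [Vp' hp]] := cvx p1 p2 t V1 V2 ht.
    exists p; rewrite !hp; split => //; split => // e eS n1 n2.
    rewrite hp; have := P1 e eS n1 n2; have := P2 e eS n1 n2.
    case/andP: ht => t0 t1 a1 a2; nra.
  move=> p [Vpp Pp] [x1 x2]; apply: (hV p Vpp) => e eS.
  have [->|n1] := eqVneq e e1 => //.
  have [->|n2] := eqVneq e e2 => //.
  exact: Pp.
pose val' p e := val p e + (e == e1)%:R * ((l - 1) * val p e1 + (1 - l) * val p e2).
have hS' : #|S :\ e2| = n.+1.
  by move: hS; rewrite (cardsD1 e2 S) e2S => -[].
have cvx' : cvxV V val'.
  move=> p1 p2 t V1 V2 ht; have [p [Vp' hp]] := cvx p1 p2 t V1 V2 ht.
  exists p; split => // e; rewrite /val' !hp; ring.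
have hV' : forall p, V p -> ~ (forall e, e \in S :\ e2 -> 0 < val' p e).
  move=> p Vpp Hp.
  have e1S' : e1 \in S :\ e2 by rewrite in_setD1 eq_sym e21.
  have := Hp e1 e1S'; rewrite /val' eqxx mul1r.
  have := hl2 p; rewrite /Vp /=.
  move=> H; have {}H : l * val p e1 + (1 - l) * val p e2 <= 0.
    apply: H; split => // e eS n1 n2.
    have := Hp e; rewrite /val' (negPf n1) mul0r addr0; apply.
    by rewrite in_setD1 n2.
  lra.
have [b' [b0 bS bsum bV]] := IH val' (S :\ e2) hS' cvx' hV'.
have b2 : b' e2 = 0 by apply: bS; rewrite in_setD1 eqxx.
exists (fun e => b' e + b' e1 * ((l - 1) * (e == e1)%:R + (1 - l) * (e == e2)%:R)).
split.
- move=> e; have [->|n1] := eqVneq e e1.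
    rewrite eq_sym (negPf e21) mulr1 mulr0 addr0; have := b0 e1; case/andP: hl => l0 l1 h; nra.
  have [->|n2] := eqVneq e e2.
    by rewrite b2 mulr0 mulr1 !add0r; have := b0 e1; case/andP: hl => l0 l1 h; nra.
  by rewrite !mulr0 addr0 mulr0 addr0.
- move=> e eS.
  have n1 : e != e1 by apply: contraNneq eS => ->.
  have n2 : e != e2 by apply: contraNneq eS => ->.
  rewrite (negPf n1) (negPf n2) !(mulr0, addr0); apply: bS.
  by rewrite in_setD1 negb_and eS orbT.
- have Hpt : forall e, b' e + b' e1 * ((l - 1) * (e == e1)%:R + (1 - l) * (e == e2)%:R)
      = (b' e + (e == e1)%:R * (b' e1 * (l - 1))) + (e == e2)%:R * (b' e1 * (1 - l)).
    by move=> e; ring.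
  by rewrite (eq_bigr _ (fun e _ => Hpt e)) sum_ind sum_ind bsum; ring.
- move=> p Vpp; have := bV p Vpp.
  have Hpt : forall e, b' e * val' p e = b' e * val p e + (e == e1)%:R * (b' e1 * ((l - 1) * val p e1 + (1 - l) * val p e2)).
    move=> e; rewrite /val'; have [->|n1] := eqVneq e e1; rewrite ?mulr0n ?mulr1n; ring.
  rewrite (eq_bigr _ (fun e _ => Hpt e)) sum_ind => H.
  have Hpt2 : forall e, (b' e + b' e1 * ((l - 1) * (e == e1)%:R + (1 - l) * (e == e2)%:R)) * val p e
      = (b' e * val p e + (e == e1)%:R * (b' e1 * (l - 1) * val p e1)) + (e == e2)%:R * (b' e1 * (1 - l) * val p e2).
    move=> e; have [->|n1] := eqVneq e e1.
      by rewrite eq_sym (negPf e21) ?mulr0n ?mulr1n; ring.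
    have [->|n2] := eqVneq e e2; rewrite ?mulr0n ?mulr1n; ring.
  rewrite (eq_bigr _ (fun e _ => Hpt2 e)) !sum_ind; move: H; congr (_ <= _); ring.
Qed.

Local Open Scope ereal_scope.

Lemma esumZ (R : realType) (T : choiceType) (I : set T) (r : R) (a : T -> \bar R) :
  (0 <= r)%R -> (forall i, 0 <= a i) ->
  \esum_(i in I) (r%:E * a i) = r%:E * \esum_(i in I) a i.
Proof.
move=> r0 a0; rewrite /esum -ereal_supZl //; last first.
  by apply/set0P; exists (\sum_(i \in set0) a i); exists set0 => //; split.
congr ereal_sup; apply/seteqP; split => x.
  move=> [F hF <-]; exists (\sum_(i \in F) a i); first by exists F.
  by rewrite ge0_mule_fsumr.
move=> [y [F hF <-] <-]; exists F => //.
by rewrite ge0_mule_fsumr.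
Qed.

Definition mixP (R : realType) (T : choiceType) (tau : T -> R) (g : T -> \bar R) :=
  \esum_(s in [set: T]) (tau s)%:E * g s.

Lemma mixP_lin (R : realType) (T : choiceType) (t1 t2 : T -> R) (g : T -> \bar R) (t : R) :
  (forall s, 0 <= t1 s)%R -> (forall s, 0 <= t2 s)%R -> (0 <= t <= 1)%R ->
  (forall s, 0 <= g s) ->
  mixP (fun s => t * t1 s + (1 - t) * t2 s)%R g = t%:E * mixP t1 g + (1 - t)%:E * mixP t2 g.
Proof.
move=> h1 h2 /andP[ht0 ht1] g0.
rewrite /mixP -!esumZ //; try (by move=> s; apply: mule_ge0 => //; rewrite lee_fin);
  try (by rewrite subr_ge0).
rewrite -esumD //; try (move=> s _; apply: mule_ge0; rewrite ?lee_fin ?subr_ge0 //;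
  by apply: mule_ge0 => //; rewrite lee_fin).
apply: eq_esum => s _.
rewrite EFinD ge0_muleDl ?lee_fin; last 2 first.
- by apply: mulr_ge0.
- by apply: mulr_ge0; rewrite ?subr_ge0.
by rewrite !EFinM !muleA.
Qed.

Lemma mixP_le (R : realType) (T : choiceType) (tau : T -> R) (g : T -> \bar R) (M : \bar R) :
  (forall s, 0 <= tau s)%R -> \esum_(s in [set: T]) (tau s)%:E = 1 ->
  (forall s, tau s != 0%R -> g s <= M) -> 0 <= M ->
  mixP tau g <= M.
Proof.
move=> t0 t1 gM M0.
have [Mfin|/fin_numPn [Mn| ->]] := boolP (M \is a fin_num); last first.
- exact: leey.
- by rewrite Mn in M0.
have : \esum_(s in [set: T]) (tau s)%:E * g s <= \esum_(s in [set: T]) (tau s)%:E * M.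
  apply: le_esum => s _; have [->|ne] := eqVneq (tau s) 0%R; first by rewrite !mul0e.
  by apply: lee_wpmul2l; rewrite ?lee_fin //; apply: gM.
move/le_trans; apply.
rewrite -(fineK Mfin) (eq_esum (b := fun s => (fine M)%:E * (tau s)%:E)); last first.
  by move=> s _; rewrite muleC.
rewrite esumZ // ?t1 ?mule1 //; first exact: fine_ge0.
Qed.

Lemma mixP_sum (R : realType) (T : choiceType) (E : finType) (tau : T -> R) (b : E -> R)
  (g : E -> T -> \bar R) :
  (forall s, 0 <= tau s)%R -> (forall e, 0 <= b e)%R -> (forall e s, 0 <= g e s) ->
  \sum_(e : E) (b e)%:E * mixP tau (g e) = mixP tau (fun s => \sum_(e : E) (b e)%:E * g e s).
Proof.
move=> t0 b0 g0; rewrite /mixP.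
rewrite (eq_esum (b := fun s => \sum_(e : E) (b e)%:E * ((tau s)%:E * g e s))); last first.
  move=> s _; rewrite ge0_sume_distrr; last first.
    by move=> e _; apply: mule_ge0; rewrite ?lee_fin.
  by apply: eq_bigr => e _; rewrite muleCA.
rewrite esum_sum; last first.
  by move=> s e _ _; apply: mule_ge0; rewrite ?lee_fin //; apply: mule_ge0; rewrite ?lee_fin.
apply: eq_bigr => e _; rewrite esumZ //.
by move=> s; apply: mule_ge0; rewrite ?lee_fin.
Qed.

Lemma suppE (R : realType) (T : choiceType) (tau : T -> R) (g : T -> \bar R) :
  (forall s, tau s = 0%R -> g s = 0) ->
  \esum_(s in [set s | tau s != 0%R]) g s = \esum_(s in [set: T]) g s.
Proof.
move=> h; rewrite esum_mkcond; apply: eq_esum => s _.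
have [e|e] := eqVneq (tau s) 0%R.
  by rewrite h // if_same.
by rewrite ifT // mem_set.
Qed.

Lemma exmin (R : realType) (E : finType) (e0 : E) (g : E -> R) :
  exists e, forall e', (g e <= g e')%R.
Proof.
case: (@arg_minP _ _ E e0 xpredT g isT) => e _ H; exists e => e'; exact: H.
Qed.

Lemma sum_ge_min (R : realType) (E : finType) (b g : E -> R) (e : E) :
  (forall e', 0 <= b e')%R -> (\sum_(e' : E) b e' = 1)%R -> (forall e', g e <= g e')%R ->
  (g e <= \sum_(e' : E) b e' * g e')%R.
Proof.
move=> b0 b1 H.
have -> : g e = (\sum_(e' : E) b e' * g e)%R by rewrite -mulr_suml b1 mul1r.
by apply: ler_sum => e' _; apply: ler_wpM2l.
Qed.

Lemma mcyl (Q : finType) (q : Q) (p : seq Q) : measurable (cyl q p : set (runs q)).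
Proof. by apply: sub_sigma_algebra; exists p. Qed.

Lemma mcoord (Q : finType) (q : Q) (n : nat) (s : Q) :
  measurable ([set w : runT q | w n = s] : set (runs q)).
Proof.
have -> : ([set w : runT q | w n = s] : set (runs q)) =
    \bigcup_(p : seq Q) (if (size p == n.+1) && (nth q p n == s) then cyl q p else set0).
  apply/seteqP; split => w /=.
    move=> wn; exists [seq w i | i <- iota 0 n.+1] => //.
    rewrite size_map size_iota eqxx andTb (nth_map 0%N) ?size_iota // nth_iota // add0n wn eqxx.
    move=> i; rewrite size_map size_iota => hi.
    by rewrite (nth_map 0%N) ?size_iota // nth_iota // add0n.
  move=> [p _]; case: ifP => // /andP[/eqP sp /eqP <-] hw.
  by apply: hw; rewrite sp.
apply: countable_bigcupT_measurable; first exact: countableP.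
by move=> p; case: ifP => _ //; exact: mcyl.
Qed.

Lemma mpred (Q : finType) (q : Q) (n : nat) (Pr : Q -> bool) :
  measurable ([set w : runT q | Pr (w n)] : set (runs q)).
Proof.
have -> : ([set w : runT q | Pr (w n)] : set (runs q)) =
    \bigcup_(s : Q) (if Pr s then [set w : runT q | w n = s] else set0).
  apply/seteqP; split => w /=.
    by move=> h; exists (w n) => //; rewrite h.
  by move=> [s _]; case: ifP => // h ->.
apply: countable_bigcupT_measurable; first exact: countableP.
by move=> s; case: ifP => _ //; exact: mcoord.
Qed.

Lemma mparity (Q : finType) (q : Q) (f : Q -> nat) :
  measurable (parity_obj q f).
Proof.
have -> : parity_obj q f =
  \bigcup_(m : nat) ((if odd m then set0 else setT) `&`
     (\bigcap_(N : nat) \bigcup_(n : nat)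
         (if (N <= n)%N then [set w : runT q | f (w n) == m] else set0)) `&`
     (\bigcup_(N : nat) \bigcap_(n : nat)
         (if (N <= n)%N then [set w : runT q | (f (w n) <= m)%N] else setT))).
  apply/seteqP; split => w /=.
    move=> [m [hm [h1 [N h2]]]]; exists m => //; split; first split.
    - by rewrite (negPf hm).
    - move=> N' _; have [n [hn hf]] := h1 N'; exists n => //.
      by rewrite hn /= hf eqxx.
    - exists N => // n _; case: ifP => // hn; exact: h2.
  move=> [m _ [[hm h1] [N _ h2]]]; exists m; split.
    by move: hm; case: (odd m).
  split.
    move=> N'; have [n _] := h1 N' I; case: ifP => // hn /eqP hf.
    by exists n.
  exists N => n hn; have := h2 n I; rewrite hn; exact.
apply: bigcupT_measurable => m; apply: measurableI; first apply: measurableI.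
- by case: (odd m).
- apply: bigcapT_measurable => N; apply: bigcupT_measurable => n.
  by case: ifP => _ //; have := @mpred _ q n (fun x => f x == m); exact.
- apply: bigcupT_measurable => N; apply: bigcapT_measurable => n.
  by case: ifP => _ //; have := @mpred _ q n (fun x => f x <= m)%N; exact.
Qed.

Unset Implicit Arguments.

Theorem mainTheorem6 (R : realType) (Q A E : finType)
  (delta : E -> Q -> A -> Q -> R) (q : Q) (f : Q -> nat)
  (P : E -> strat R Q A -> probability (runs q) R)
  (hA : (0 < #|A|)%N) (hE : (0 < #|E|)%N)
  (hdelta : is_MEMDP delta)
  (hP : forall e s, is_strat s -> is_run_measure (delta e) s q (P e s)) :
  ereal_sup [set ereal_inf [set valpr_mixed P b tau (parity_obj q f)
                           | b in [set b | is_fdist b]]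
            | tau in [set tau | is_mixed tau]]
  = ereal_inf [set ereal_sup [set valpr_mixed P b tau (parity_obj q f)
                             | tau in [set tau | is_mixed tau]]
              | b in [set b | is_fdist b]]
  /\
  ereal_sup [set valuni_mixed P tau (parity_obj q f) | tau in [set tau | is_mixed tau]]
  = ereal_inf [set valpr P b (parity_obj q f) | b in [set b | is_fdist b]].
Proof.
set W := parity_obj q f.
have mW : measurable W := @mparity _ q f.
have [e0 _] : exists e0 : E, true by move/card_gt0P: hE => [e0 _]; exists e0.
pose s0 : strat R Q A := fun _ _ _ => (#|A|%:R)^-1%R.
have s0S : is_strat s0.
  move=> q0 h; split => [a|]; first by rewrite invr_ge0 ler0n.
  rewrite sumr_const -(mulr_natl ((#|A|%:R)^-1)%R #|xpredT|) mulfV //.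
  by rewrite pnatr_eq0 -lt0n.
have Pm0 : forall e s, 0 <= P e s W by move=> e s; exact: measure_ge0.
have Pm1 : forall e s, P e s W <= 1 by move=> e s; exact: probability_le1.
have mix1 : forall tau, is_mixed tau -> \esum_(s in [set: strat R Q A]) (tau s)%:E = 1.
  move=> tau [t0 _ _ t1]; rewrite -t1 suppE // => s ->; by [].
have mix1' : forall tau : strat R Q A -> R, is_mixed tau -> mixP tau (fun _ => 1) = 1.
  move=> tau htau; rewrite /mixP -[RHS](mix1 tau htau); apply: eq_esum => s _; by rewrite mule1.
have PmixE : forall e tau, Pmix (P e) tau W = mixP tau (fun s => P e s W).
  by move=> e tau; rewrite /Pmix suppE // => s ->; rewrite mul0e.
have pm01 : forall e tau, is_mixed tau -> 0 <= Pmix (P e) tau W <= 1.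
  move=> e tau htau; have [t0 _ _ _] := htau; rewrite PmixE; apply/andP; split.
    by apply: esum_ge0 => s _; apply: mule_ge0; rewrite ?lee_fin.
  by apply: mixP_le => //; apply: mix1.
pose v e tau := fine (Pmix (P e) tau W).
have pmE : forall e tau, is_mixed tau -> Pmix (P e) tau W = (v e tau)%:E.
  move=> e tau htau; rewrite /v fineK //; have /andP[h0 h1] := pm01 e tau htau.
  by rewrite ge0_fin_numE // (le_lt_trans h1) // ltry.
have v01 : forall e tau, is_mixed tau -> (0 <= v e tau <= 1)%R.
  by move=> e tau htau; have := pm01 e tau htau; rewrite pmE // !lee_fin.
have FE : forall b tau, is_mixed tau ->
    valpr_mixed P b tau W = (\sum_(e : E) b e * v e tau)%:E.
  move=> b tau htau; rewrite /valpr_mixed -sumEFin; apply: eq_bigr => e _.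
  by rewrite pmE // EFinM.
have cvx : forall (tau1 tau2 : strat R Q A -> R) (t : R), is_mixed tau1 -> is_mixed tau2 -> (0 <= t <= 1)%R ->
    is_mixed (fun s => t * tau1 s + (1 - t) * tau2 s)%R /\ forall e, v e (fun s => t * tau1 s + (1 - t) * tau2 s)%R = (t * v e tau1 + (1 - t) * v e tau2)%R.
  move=> tau1 tau2 t h1 h2 ht.
  have [a0 aS aC aE] := h1; have [b0 bS bC bE] := h2.
  have /andP[t0 t1] := ht.
  have tau0 : forall s, (0 <= t * tau1 s + (1 - t) * tau2 s)%R.
    by move=> s; apply: addr_ge0; apply: mulr_ge0; rewrite ?subr_ge0.
  have hm : is_mixed (fun s => t * tau1 s + (1 - t) * tau2 s)%R.
    split => //.
    - move=> s hs; have [z1|] := eqVneq (tau1 s) 0%R; last exact: aS.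
      have [z2|] := eqVneq (tau2 s) 0%R; last exact: bS.
      by move: hs; rewrite z1 z2 !mulr0 addr0 eqxx.
    - apply: (@sub_countable _ _ _ (\bigcup_(i in [set: bool])
          (if i then [set s | tau1 s != 0%R] else [set s | tau2 s != 0%R]))).
        apply: subset_card_le => s /= hs.
        have [z1|n1] := eqVneq (tau1 s) 0%R; last by exists true.
        have [z2|n2] := eqVneq (tau2 s) 0%R; last by exists false.
        by move: hs; rewrite z1 z2 !mulr0 addr0 eqxx.
      apply: bigcup_countable; first exact: countableP.
      by move=> [] _.
    - rewrite suppE //; last by move=> s ->.
      transitivity (mixP (fun s => t * tau1 s + (1 - t) * tau2 s)%R (fun _ => 1)).
        by rewrite /mixP; apply: eq_esum => s _; rewrite mule1.
      rewrite mixP_lin // ?mix1' //; try by move=> _; exact: lee01.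
      by rewrite !mule1 -EFinD; congr (_%:E); ring.
  split => // e.
  have := pmE e _ hm; rewrite PmixE mixP_lin //; last first.
  rewrite -!PmixE !pmE // -!EFinM -EFinD => -[] ->; by [].
pose dir (s1 : strat R Q A) : strat R Q A -> R := fun s => if `[< s = s1 >] then 1%R else 0%R.
have dirsupp : forall s1, [set s | dir s1 s != 0%R] = [set s1].
  move=> s1; apply/seteqP; split => s /=.
    by rewrite /dir; case: asboolP => // _; rewrite eqxx.
  by move=> ->; rewrite /dir asboolT // oner_neq0.
have dirM : forall s1, is_strat s1 -> is_mixed (dir s1).
  move=> s1 hs1; split.
  - by move=> s; rewrite /dir; case: asboolP.
  - by move=> s; rewrite /dir; case: asboolP => [-> //|_]; rewrite eqxx.
  - by rewrite dirsupp; exact: countable1.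
  - by rewrite dirsupp esum_set1 /dir asboolT // lee01.
have dirP : forall s1 e, Pmix (P e) (dir s1) W = P e s1 W.
  move=> s1 e; rewrite /Pmix dirsupp esum_set1 /dir asboolT // ?mul1e // lee_fin.
have dirv : forall s1 e, is_strat s1 -> (v e (dir s1))%:E = P e s1 W.
  by move=> s1 e hs1; rewrite -pmE ?dirP //; exact: dirM.
have hsum : forall b tau, is_fdist b -> is_mixed tau -> (0 <= \sum_(e : E) b e * v e tau)%R.
  move=> b tau [b0 _] htau; apply: sumr_ge0 => e _; apply: mulr_ge0 => //.
  by have /andP[] := v01 e tau htau.
have part1 : ereal_sup [set ereal_inf [set valpr_mixed P b tau W
                           | b in [set b | is_fdist b]]
            | tau in [set tau | is_mixed tau]]
  = ereal_inf [set ereal_sup [set valpr_mixed P b tau W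
                             | tau in [set tau | is_mixed tau]]
              | b in [set b | is_fdist b]].
  apply/eqP; rewrite eq_le; apply/andP; split.
    apply: ge_ereal_sup => _ [tau htau <-]; apply: le_ereal_inf_tmp => _ [b hb <-].
    apply: (@le_trans _ _ (valpr_mixed P b tau W)).
      by apply: ereal_inf_lbound; exists b.
    by apply: ereal_sup_ubound; exists tau.
  set c := ereal_sup _.
  have c0 : 0 <= c.
    apply: le_ereal_sup_tmp; exists (ereal_inf [set valpr_mixed P b (dir s0) W | b in [set b | is_fdist b]]).
      by exists (dir s0) => //; exact: dirM.
    apply: le_ereal_inf_tmp => _ [b hb <-]; rewrite FE ?lee_fin; last exact: dirM.
    by apply: hsum => //; exact: dirM.
  case cE : c c0 => [r| |] // c0; last exact: leey.
  have [n hn] : exists n, #|E| = n.+1 by exists #|E|.-1; rewrite prednK.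
  have hS : #|[set: E]%SET| = n.+1 by rewrite cardsT.
  have cvx' : cvxV [set tau | is_mixed tau] (fun tau e => v e tau - r)%R.
    move=> p1 p2 t h1 h2 ht; have [hm hv] := cvx p1 p2 t h1 h2 ht.
    by exists (fun s => t * p1 s + (1 - t) * p2 s)%R; split => // e; rewrite hv; ring.
  have hV' : forall tau, [set tau | is_mixed tau] tau ->
      ~ (forall e, e \in [set: E]%SET -> (0 < v e tau - r)%R).
    move=> tau htau H; have [es hes] := exmin e0 (fun e => v e tau).
    have h1 : (v es tau)%:E <= ereal_inf [set valpr_mixed P b tau W | b in [set b | is_fdist b]].
      apply: le_ereal_inf_tmp => _ [b [hb0 hb1] <-]; rewrite FE // lee_fin.
      exact: sum_ge_min.
    have h2 : ereal_inf [set valpr_mixed P b tau W | b in [set b | is_fdist b]] <= c.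
      by apply: ereal_sup_ubound; exists tau.
    have := le_trans h1 h2; rewrite cE lee_fin.
    have := H es (finset.in_setT es); lra.
  have [b [b0 _ b1 bV]] := @sep R E _ [set tau | is_mixed tau] n (fun tau e => v e tau - r)%R _ hS cvx' hV'.
  apply: ge_ereal_inf; exists (ereal_sup [set valpr_mixed P b tau W | tau in [set tau | is_mixed tau]]).
    by exists b.
  apply: ge_ereal_sup => _ [tau htau <-]; rewrite FE // lee_fin; have := bV tau htau.
  under eq_bigr do rewrite mulrBr.
  rewrite sumrB -mulr_suml b1 mul1r; lra.
split => //.
have e1 : [set valuni_mixed P tau W | tau in [set tau | is_mixed tau]] =
    [set ereal_inf [set valpr_mixed P b tau W | b in [set b | is_fdist b]]
     | tau in [set tau | is_mixed tau]].
  apply: eq_imagel => tau htau; rewrite /valuni_mixed.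
  have [es hes] := exmin e0 (fun e => v e tau).
  apply/eqP; rewrite eq_le; apply/andP; split.
    apply: le_ereal_inf_tmp => _ [b [hb0 hb1] <-].
    apply: ge_ereal_inf; exists (Pmix (P es) tau W) => //.
    by rewrite FE // pmE // lee_fin; exact: sum_ge_min.
  apply: le_ereal_inf_tmp => _ [e _ <-].
  apply: ge_ereal_inf; exists (valpr_mixed P (fun e' => (e' == e)%:R) tau W).
    exists (fun e' => (e' == e)%:R) => //; split.
      by move=> e'; case: (e' == e).
    by rewrite (bigD1 e) //= eqxx big1 ?addr0 // => e' /negPf ->.
  rewrite FE // pmE // lee_fin (bigD1 e) //= eqxx mul1r big1 ?addr0 //.
  by move=> e' /negPf ->; rewrite mul0r.
have e2 : [set valpr P b W | b in [set b | is_fdist b]] =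
    [set ereal_sup [set valpr_mixed P b tau W | tau in [set tau | is_mixed tau]]
     | b in [set b | is_fdist b]].
  apply: eq_imagel => b [hb0 hb1]; rewrite /valpr.
  apply/eqP; rewrite eq_le; apply/andP; split.
    apply: ge_ereal_sup => _ [s hs <-]; apply: le_ereal_sup_tmp.
    exists (valpr_mixed P b (dir s) W); first by exists (dir s) => //; exact: dirM.
    rewrite /valpr_mixed le_eqVlt; apply/orP; left; apply/eqP; apply: eq_bigr => e _; by rewrite dirP.
  apply: ge_ereal_sup => _ [tau htau <-].
  have [t0 tS _ _] := htau.
  rewrite /valpr_mixed; under eq_bigr => e _ do rewrite PmixE.
  rewrite mixP_sum //; apply: mixP_le => //; first exact: mix1.
    by move=> s /tS hs; apply: ereal_sup_ubound; exists s.
  apply: le_ereal_sup_tmp; exists (\sum_(e : E) (b e)%:E * P e s0 W); first by exists s0.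
  by apply: sume_ge0 => e _; apply: mule_ge0; rewrite ?lee_fin.
rewrite e1 e2; exact: part1.
Qed.
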